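(* Let $n\ge 2$ and let $r_1,\ldots,r_n>0$ be such that there exists a homothetic square packing with radii $r_1,\ldots,r_n$ and $k$ contacts. Then for every $r_{n+1}>0$ there exists a homothetic square packing with radii $r_1,\ldots,r_{n+1}$ and at least $k+2$ contacts.
   Context: Let $S=\{(x,y): -1\le x,y\le 1\}$. A homothetic square packing with radii $r_1,\ldots,r_m$ is a set $\{S_1,\ldots,S_m\}$ with $S_i=r_iS+p_i$ for some $p_i\in\mathbb{R}^2$, such that distinct squares have disjoint interiors. A contact is an unordered pair $\{i,j\}$, $i\ne j$, with $S_i\cap S_j\ne\emptyset$. *)

(* Defs.v *)
From Stdlib Require Import Reals Lra Lia List.
Open Scope R_scope.

Definition point := (R * R)%type.

Definition unit_square (s : point) : Prop :=
  -1 <= fst s <= 1 /\ -1 <= snd s <= 1.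

Definition hsquare (r : R) (p : point) (z : point) : Prop :=
  exists s, unit_square s /\ z = (r * fst s + fst p, r * snd s + snd p).

Definition interior (A : point -> Prop) (z : point) : Prop :=
  exists eps, 0 < eps /\
    forall w, (fst w - fst z)^2 + (snd w - snd z)^2 < eps^2 -> A w.

Definition is_packing (m : nat) (r : nat -> R) (p : nat -> point) : Prop :=
  forall i j, (i < m)%nat -> (j < m)%nat -> i <> j ->
    forall z, ~ (interior (hsquare (r i) (p i)) z /\
                 interior (hsquare (r j) (p j)) z).

(* contact {i,j}, represented by the ordered pair (i,j) with i < j *)
Definition contact (m : nat) (r : nat -> R) (p : nat -> point) (ij : nat * nat) : Prop :=
  (fst ij < snd ij < m)%nat /\
  exists z, hsquare (r (fst ij)) (p (fst ij)) z /\ hsquare (r (snd ij)) (p (snd ij)) z.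

Definition num_contacts (m : nat) (r : nat -> R) (p : nat -> point) (k : nat) : Prop :=
  exists l : list (nat * nat), NoDup l /\
    (forall ij, In ij l <-> contact m r p ij) /\ length l = k.

(* Main.v *)
Require Import Defs.
From Stdlib Require Import Reals List Lra Lia ClassicalEpsilon Classical.
Open Scope R_scope.

Ltac rabs := unfold Rabs in *; repeat match goal with
  | |- context [Rcase_abs ?x] => destruct (Rcase_abs x)
  | H: context [Rcase_abs ?x] |- _ => destruct (Rcase_abs x) end; try lra.

Lemma div_le1 d D : 0 < D -> Rabs d <= D -> Rabs (d / D) <= 1.
Proof.
  intros HD H. unfold Rdiv. rewrite Rabs_mult, Rabs_inv, (Rabs_pos_eq D) by lra.
  apply (Rmult_le_reg_r D); [lra|]. rewrite Rmult_assoc, Rinv_l, Rmult_1_r; lra.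
Qed.
Lemma div_lt1 d D : 0 < D -> Rabs d < D -> Rabs (d / D) < 1.
Proof.
  intros HD H. unfold Rdiv. rewrite Rabs_mult, Rabs_inv, (Rabs_pos_eq D) by lra.
  apply (Rmult_lt_reg_r D); [lra|]. rewrite Rmult_assoc, Rinv_l, Rmult_1_r; lra.
Qed.
Lemma abs_scale r u : 0 < r -> Rabs u <= 1 -> Rabs (r * u) <= r.
Proof. intros Hr Hu. rewrite Rabs_mult, Rabs_pos_eq by lra. nra. Qed.
Lemma abs_scale_lt r u : 0 < r -> Rabs u < 1 -> Rabs (r * u) < r.
Proof. intros Hr Hu. rewrite Rabs_mult, Rabs_pos_eq by lra. nra. Qed.

Lemma hsq_iff r p z : 0 < r -> (hsquare r p z <-> Rabs (fst z - fst p) <= r /\ Rabs (snd z - snd p) <= r).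
Proof.
  intros Hr; split.
  - intros [s [[Hs1 Hs2] ->]]; simpl.
    replace (r * fst s + fst p - fst p) with (r * fst s) by ring.
    replace (r * snd s + snd p - snd p) with (r * snd s) by ring.
    split; apply abs_scale; auto; rabs.
  - intros [H1 H2]. exists ((fst z - fst p)/r, (snd z - snd p)/r). split.
    + apply div_le1 in H1, H2; auto. unfold unit_square; simpl. rabs.
    + destruct z as [zx zy]; simpl. f_equal; field; lra.
Qed.

Definition close (r1 : R) (p1 : point) (r2 : R) (p2 : point) :=
  Rabs (fst p1 - fst p2) <= r1 + r2 /\ Rabs (snd p1 - snd p2) <= r1 + r2.
Definition sep (r1 : R) (p1 : point) (r2 : R) (p2 : point) :=
  r1 + r2 <= Rabs (fst p1 - fst p2) \/ r1 + r2 <= Rabs (snd p1 - snd p2).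

Definition wpt (r1 : R) (p1 : point) (r2 : R) (p2 : point) : point :=
  ((r2 * fst p1 + r1 * fst p2) / (r1 + r2), (r2 * snd p1 + r1 * snd p2) / (r1 + r2)).

Lemma wpt_le a1 a2 r1 r2 : 0 < r1 -> 0 < r2 -> Rabs (a1 - a2) <= r1 + r2 ->
  Rabs ((r2 * a1 + r1 * a2) / (r1 + r2) - a1) <= r1 /\ Rabs ((r2 * a1 + r1 * a2) / (r1 + r2) - a2) <= r2.
Proof.
  intros H1 H2 H.
  replace ((r2 * a1 + r1 * a2) / (r1 + r2) - a1) with (r1 * ((a2 - a1) / (r1 + r2))) by (field; lra).
  replace ((r2 * a1 + r1 * a2) / (r1 + r2) - a2) with (r2 * ((a1 - a2) / (r1 + r2))) by (field; lra).
  split; apply abs_scale; auto; apply div_le1; try lra; rabs.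
Qed.
Lemma wpt_lt a1 a2 r1 r2 : 0 < r1 -> 0 < r2 -> Rabs (a1 - a2) < r1 + r2 ->
  Rabs ((r2 * a1 + r1 * a2) / (r1 + r2) - a1) < r1 /\ Rabs ((r2 * a1 + r1 * a2) / (r1 + r2) - a2) < r2.
Proof.
  intros H1 H2 H.
  replace ((r2 * a1 + r1 * a2) / (r1 + r2) - a1) with (r1 * ((a2 - a1) / (r1 + r2))) by (field; lra).
  replace ((r2 * a1 + r1 * a2) / (r1 + r2) - a2) with (r2 * ((a1 - a2) / (r1 + r2))) by (field; lra).
  split; apply abs_scale_lt; auto; apply div_lt1; try lra; rabs.
Qed.

Lemma close_contact r1 p1 r2 p2 : 0 < r1 -> 0 < r2 ->
  ((exists z, hsquare r1 p1 z /\ hsquare r2 p2 z) <-> close r1 p1 r2 p2).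
Proof.
  intros H1 H2; split.
  - intros [z [Hz1 Hz2]]. apply hsq_iff in Hz1, Hz2; auto. unfold close.
    destruct Hz1, Hz2. split; rabs.
  - intros [Hx Hy]. exists (wpt r1 p1 r2 p2).
    destruct (wpt_le _ _ _ _ H1 H2 Hx), (wpt_le _ _ _ _ H1 H2 Hy).
    split; apply hsq_iff; auto.
Qed.

Lemma int_open r p z : 0 < r -> Defs.interior (hsquare r p) z ->
  Rabs (fst z - fst p) < r /\ Rabs (snd z - snd p) < r.
Proof.
  intros Hr [e [He H]].
  split; apply Rnot_le_lt; intro Hc.
  - destruct (Rle_dec (fst p) (fst z)).
    + assert (HH: hsquare r p (fst z + e/2, snd z)) by (apply H; simpl; nra).
      apply hsq_iff in HH; auto. simpl in HH. destruct HH. rabs.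
    + assert (HH: hsquare r p (fst z - e/2, snd z)) by (apply H; simpl; nra).
      apply hsq_iff in HH; auto. simpl in HH. destruct HH. rabs.
  - destruct (Rle_dec (snd p) (snd z)).
    + assert (HH: hsquare r p (fst z, snd z + e/2)) by (apply H; simpl; nra).
      apply hsq_iff in HH; auto. simpl in HH. destruct HH. rabs.
    + assert (HH: hsquare r p (fst z, snd z - e/2)) by (apply H; simpl; nra).
      apply hsq_iff in HH; auto. simpl in HH. destruct HH. rabs.
Qed.

Lemma open_int r p z : 0 < r -> 
  Rabs (fst z - fst p) < r -> Rabs (snd z - snd p) < r -> Defs.interior (hsquare r p) z.
Proof.
  intros Hr H1 H2. exists (Rmin (r - Rabs (fst z - fst p)) (r - Rabs (snd z - snd p))).
  split. { apply Rmin_glb_lt; lra. }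
  intros w Hw. apply hsq_iff; auto.
  set (m := Rmin _ _) in Hw.
  assert (m <= r - Rabs (fst z - fst p)) by apply Rmin_l.
  assert (m <= r - Rabs (snd z - snd p)) by apply Rmin_r.
  assert (Hm: 0 < m) by (apply Rmin_glb_lt; lra).
  assert (Rabs (fst w - fst z) < m).
  { assert (Hq: (fst w - fst z)^2 < m^2) by (pose proof (pow2_ge_0 (snd w - snd z)); lra).
    set (a := fst w - fst z) in *. unfold Rabs; destruct Rcase_abs; nra. }
  assert (Rabs (snd w - snd z) < m).
  { assert (Hq: (snd w - snd z)^2 < m^2) by (pose proof (pow2_ge_0 (fst w - fst z)); lra).
    set (a := snd w - snd z) in *. unfold Rabs; destruct Rcase_abs; nra. }
  split; rabs.
Qed.

Lemma sep_pack r1 p1 r2 p2 : 0 < r1 -> 0 < r2 -> sep r1 p1 r2 p2 ->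
  forall z, ~ (Defs.interior (hsquare r1 p1) z /\ Defs.interior (hsquare r2 p2) z).
Proof.
  intros H1 H2 Hs z [I1 I2]. apply int_open in I1, I2; auto.
  destruct I1, I2. destruct Hs; rabs.
Qed.

Lemma pack_sep r1 p1 r2 p2 : 0 < r1 -> 0 < r2 ->
  (forall z, ~ (Defs.interior (hsquare r1 p1) z /\ Defs.interior (hsquare r2 p2) z)) ->
  sep r1 p1 r2 p2.
Proof.
  intros H1 H2 H. unfold sep.
  destruct (Rle_dec (r1 + r2) (Rabs (fst p1 - fst p2))) as [|Hx]; [now left|].
  destruct (Rle_dec (r1 + r2) (Rabs (snd p1 - snd p2))) as [|Hy]; [now right|].
  exfalso. apply Rnot_le_lt in Hx, Hy.
  destruct (wpt_lt _ _ _ _ H1 H2 Hx), (wpt_lt _ _ _ _ H1 H2 Hy).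
  apply (H (wpt r1 p1 r2 p2)). split; apply open_int; auto.
Qed.

Lemma sep_sym r1 p1 r2 p2 : sep r1 p1 r2 p2 -> sep r2 p2 r1 p1.
Proof. unfold sep; rewrite (Rabs_minus_sym (fst p2)), (Rabs_minus_sym (snd p2)); lra. Qed.
Lemma close_sym r1 p1 r2 p2 : close r1 p1 r2 p2 -> close r2 p2 r1 p1.
Proof. unfold close; rewrite (Rabs_minus_sym (fst p2)), (Rabs_minus_sym (snd p2)); lra. Qed.

Lemma pack_intro m r p : (forall i, (i < m)%nat -> 0 < r i) ->
  (forall i j, (i < j)%nat -> (j < m)%nat -> sep (r i) (p i) (r j) (p j)) -> is_packing m r p.
Proof.
  intros Hp H i j Hi Hj Hij. apply sep_pack; auto.
  destruct (Nat.lt_gt_cases i j) as [[Hl|Hl] _]; [lia| |].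
  - apply H; auto.
  - apply sep_sym, H; auto.
Qed.

Lemma pack_elim m r p i j : (forall i, (i < m)%nat -> 0 < r i) -> is_packing m r p ->
  (i < m)%nat -> (j < m)%nat -> i <> j -> sep (r i) (p i) (r j) (p j).
Proof. intros Hp H Hi Hj Hij. apply pack_sep; auto. Qed.

Lemma contact_iff m r p i j : 0 < r i -> 0 < r j ->
  (contact m r p (i, j) <-> (i < j < m)%nat /\ close (r i) (p i) (r j) (p j)).
Proof.
  intros H1 H2. unfold contact; simpl. rewrite close_contact; auto. tauto.
Qed.

Lemma NoDup_prod {A B} (l : list A) (l' : list B) : NoDup l -> NoDup l' -> NoDup (list_prod l l').
Proof.
  induction 1 as [|a l Ha Hl IH]; intros Hl'; simpl; [constructor|].
  apply NoDup_app.
  - apply NoDup_map_NoDup_ForallPairs; [|exact Hl'].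
    intros x y _ _ E; inversion E; reflexivity.
  - now apply IH.
  - intros [x y] H1 H2. apply in_map_iff in H1. destruct H1 as [z [E _]]. inversion E; subst.
    apply in_prod_iff in H2. tauto.
Qed.

Lemma count_exists m r p : exists k', num_contacts m r p k'.
Proof.
  set (f := fun ij => if excluded_middle_informative (contact m r p ij) then true else false).
  exists (length (filter f (list_prod (seq 0 m) (seq 0 m)))).
  exists (filter f (list_prod (seq 0 m) (seq 0 m))). split; [|split; [|reflexivity]].
  - apply NoDup_filter, NoDup_prod; apply seq_NoDup.
  - intros [i j]. rewrite filter_In, in_prod_iff, !in_seq. unfold f.
    destruct (excluded_middle_informative _) as [H|H]; split; intros HH.
    + exact H.
    + destruct H as [[H1 H2] _]; simpl in *; repeat split; try lia.
    + destruct HH as [_ E]; discriminate.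
    + contradiction.
Qed.

Lemma count_ge m r p k' l0 : num_contacts m r p k' -> NoDup l0 ->
  (forall ij, In ij l0 -> contact m r p ij) -> (length l0 <= k')%nat.
Proof.
  intros [l [Hn [Hi Hl]]] H0 Hc. subst k'. apply NoDup_incl_length; auto.
  intros ij Hij. apply Hi, Hc, Hij.
Qed.

Lemma argmax (P : nat -> Prop) (f : nat -> R) m : (exists i, (i < m)%nat /\ P i) ->
  exists j, (j < m)%nat /\ P j /\ forall i, (i < m)%nat -> P i -> f i <= f j.
Proof.
  induction m as [|m IH]; intros [i [Hi Pi]]; [lia|].
  destruct (classic (exists i, (i < m)%nat /\ P i)) as [Hex|Hno].
  - destruct (IH Hex) as [j [Hj [Pj Hmax]]].
    destruct (classic (P m)) as [Pm|nPm].
    + destruct (Rle_dec (f m) (f j)).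
      * exists j; repeat split; auto. intros i' Hi' Pi'.
        destruct (Nat.eq_dec i' m); [subst; auto|apply Hmax; auto; lia].
      * exists m; repeat split; auto. intros i' Hi' Pi'.
        destruct (Nat.eq_dec i' m); [subst; lra|]. specialize (Hmax i'). 
        assert (f i' <= f j) by (apply Hmax; auto; lia). lra.
    + exists j; repeat split; auto. intros i' Hi' Pi'.
      destruct (Nat.eq_dec i' m); [subst; contradiction|apply Hmax; auto; lia].
  - assert (i = m). { destruct (Nat.eq_dec i m); auto. exfalso; apply Hno; exists i; split; auto; lia. }
    subst. exists m; repeat split; auto. intros i' Hi' Pi'.
    destruct (Nat.eq_dec i' m); [subst; lra|]. exfalso; apply Hno; exists i'; split; auto; lia.
Qed.

Definition mx (a b : R) := (a + b + Rabs (a - b)) / 2.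
Definition mn (a b : R) := (a + b - Rabs (a - b)) / 2.
Lemma mx_eq a b : mx a b = Rmax a b.
Proof. unfold mx, Rmax; destruct Rle_dec; rabs. Qed.
Lemma mn_eq a b : mn a b = Rmin a b.
Proof. unfold mn, Rmin; destruct Rle_dec; rabs. Qed.

Lemma c_plus f g : continuity f -> continuity g -> continuity (fun t => f t + g t).
Proof. intros; apply (continuity_plus f g); auto. Qed.
Lemma c_minus f g : continuity f -> continuity g -> continuity (fun t => f t - g t).
Proof. intros; apply (continuity_minus f g); auto. Qed.
Lemma c_mult f g : continuity f -> continuity g -> continuity (fun t => f t * g t).
Proof. intros; apply (continuity_mult f g); auto. Qed.
Lemma c_const (a : R) : continuity (fun _ => a).
Proof. apply continuity_const; intros x y; reflexivity. Qed.
Lemma c_id : continuity (fun t => t).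
Proof. apply derivable_continuous, derivable_id. Qed.
Lemma c_abs f : continuity f -> continuity (fun t => Rabs (f t)).
Proof. intros; apply (continuity_comp f Rabs); auto. apply Rcontinuity_abs. Qed.
Lemma c_mx f g : continuity f -> continuity g -> continuity (fun t => mx (f t) (g t)).
Proof.
  intros. unfold mx, Rdiv. apply c_mult; [|apply c_const].
  apply c_plus; [apply c_plus; auto|]. apply c_abs, c_minus; auto.
Qed.
Lemma c_mn f g : continuity f -> continuity g -> continuity (fun t => mn (f t) (g t)).
Proof.
  intros. unfold mn, Rdiv. apply c_mult; [|apply c_const].
  apply c_minus; [apply c_plus; auto|]. apply c_abs, c_minus; auto.
Qed.

Definition clamp z := mx (-1) (mn 1 z).
Lemma clamp_spec z : (z <= -1 /\ clamp z = -1) \/ (-1 <= z <= 1 /\ clamp z = z) \/ (1 <= z /\ clamp z = 1).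
Proof.
  unfold clamp; rewrite mx_eq, mn_eq. unfold Rmax, Rmin.
  repeat destruct Rle_dec; lra.
Qed.
Lemma c_clamp f : continuity f -> continuity (fun t => clamp (f t)).
Proof. intros; unfold clamp. apply c_mx; [apply c_const|]. apply c_mn; auto; apply c_const. Qed.

Definition LX t := clamp (Rabs (t - 3) - 2).
Definition LY t := clamp (Rabs (t - 5) - 2).
Lemma c_LX : continuity LX.
Proof. unfold LX. apply c_clamp, c_minus; [apply c_abs, c_minus; [apply c_id|apply c_const]|apply c_const]. Qed.
Lemma c_LY : continuity LY.
Proof. unfold LY. apply c_clamp, c_minus; [apply c_abs, c_minus; [apply c_id|apply c_const]|apply c_const]. Qed.

Lemma L_bnd t : Rabs (LX t) <= 1 /\ Rabs (LY t) <= 1 /\ (Rabs (LX t) = 1 \/ Rabs (LY t) = 1).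
Proof.
  unfold LX, LY.
  destruct (clamp_spec (Rabs (t - 3) - 2)) as [[? ->]|[[? ->]|[? ->]]];
  destruct (clamp_spec (Rabs (t - 5) - 2)) as [[? ->]|[[? ->]|[? ->]]]; rabs.
Qed.
Lemma L0 : LX 0 = 1 /\ LY 0 = 1.
Proof.
  unfold LX, LY.
  destruct (clamp_spec (Rabs (0 - 3) - 2)) as [[? ->]|[[? ->]|[? ->]]];
  destruct (clamp_spec (Rabs (0 - 5) - 2)) as [[? ->]|[[? ->]|[? ->]]]; rabs.
Qed.
Lemma L_surj u v : Rabs u <= 1 -> Rabs v <= 1 -> (Rabs u = 1 \/ Rabs v = 1) ->
  exists t, 0 <= t /\ LX t = u /\ LY t = v.
Proof.
  intros Hu Hv Huv. unfold LX, LY.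
  assert (C: v = 1 \/ u = -1 \/ v = -1 \/ u = 1) by rabs.
  destruct C as [C|[C|[C|C]]]; [exists (1 - u)|exists (3 - v)|exists (5 + u)|exists (7 + v)];
  (split; [rabs|]); subst;
  match goal with |- clamp ?a = _ /\ clamp ?b = _ =>
    destruct (clamp_spec a) as [[? ->]|[[? ->]|[? ->]]];
    destruct (clamp_spec b) as [[? ->]|[[? ->]|[? ->]]] end; split; rabs.
Qed.

Definition cpt (pA : point) (RA t : R) : point := (fst pA + RA * LX t, snd pA + RA * LY t).
Definition Gf (r : nat -> R) (p : nat -> point) (s : R) (pA : point) (RA : R) (i : nat) (t : R) :=
  mx (Rabs (fst (cpt pA RA t) - fst (p i))) (Rabs (snd (cpt pA RA t) - snd (p i))) - (r i + s).
Fixpoint hm r p s pA RA (A : nat) (m : nat) (t : R) : R :=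
  match m with
  | O => 1
  | S i => if Nat.eqb i A then hm r p s pA RA A i t else mn (hm r p s pA RA A i t) (Gf r p s pA RA i t)
  end.

Lemma c_G r p s pA RA i : continuity (Gf r p s pA RA i).
Proof.
  unfold Gf, cpt; simpl. apply c_minus; [|apply c_const].
  apply c_mx; apply c_abs, c_minus; try apply c_const; apply c_plus; try apply c_const;
  apply c_mult; try apply c_const; [apply c_LX|apply c_LY].
Qed.
Lemma c_hm r p s pA RA A m : continuity (hm r p s pA RA A m).
Proof.
  induction m; simpl; [apply c_const|]. destruct (Nat.eqb m A); auto.
  apply c_mn; auto. apply c_G.
Qed.
Lemma hm_le r p s pA RA A m t i : (i < m)%nat -> i <> A -> hm r p s pA RA A m t <= Gf r p s pA RA i t.
Proof.
  induction m; intros Hi HA; [lia|]; simpl.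
  destruct (Nat.eqb_spec m A).
  - apply IHm; auto. lia.
  - rewrite mn_eq. destruct (Nat.eq_dec i m).
    + subst; apply Rmin_r.
    + eapply Rle_trans; [apply Rmin_l|]. apply IHm; auto; lia.
Qed.
Lemma hm_ge r p s pA RA A m t : (forall i, (i < m)%nat -> i <> A -> 0 <= Gf r p s pA RA i t) ->
  0 <= hm r p s pA RA A m t.
Proof.
  induction m; intros H; simpl; [lra|].
  destruct (Nat.eqb_spec m A).
  - apply IHm; intros; apply H; auto.
  - rewrite mn_eq. apply Rmin_glb; [apply IHm; intros; apply H; auto|apply H; auto].
Qed.
Lemma hm_cases r p s pA RA A m t : hm r p s pA RA A m t = 1 \/
  exists i, (i < m)%nat /\ i <> A /\ hm r p s pA RA A m t = Gf r p s pA RA i t.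
Proof.
  induction m; simpl; [auto|].
  destruct (Nat.eqb_spec m A).
  - destruct IHm as [H|[i [H1 [H2 H3]]]]; auto. right; exists i; repeat split; auto.
  - rewrite mn_eq. unfold Rmin. destruct Rle_dec.
    + destruct IHm as [H|[i [H1 [H2 H3]]]]; auto. right; exists i; repeat split; auto.
    + right; exists m; repeat split; auto.
Qed.
Lemma abs_div d D : 0 < D -> Rabs (d / D) = Rabs d / D.
Proof. intros. unfold Rdiv. rewrite Rabs_mult, Rabs_inv, (Rabs_pos_eq D) by lra. reflexivity. Qed.

Theorem lemma20 (n : nat) (r : nat -> R) (k : nat) :
  (2 <= n)%nat ->
  (forall i, (i < n)%nat -> 0 < r i) ->
  (exists p : nat -> point, is_packing n r p /\ num_contacts n r p k) ->
  0 < r n ->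
  exists (p : nat -> point) (k' : nat),
    is_packing (S n) r p /\ num_contacts (S n) r p k' /\ (k + 2 <= k')%nat.
Proof.
  intros Hn Hpos [p [Hpack [l [Hl [Hli Hlen]]]]] Hs.
  assert (Hpos' : forall i, (i < S n)%nat -> 0 < r i).
  { intros i Hi. destruct (Nat.eq_dec i n); [subst; auto|apply Hpos; lia]. }
  assert (Hold : forall ij, In ij l -> (fst ij < snd ij < n)%nat /\
            close (r (fst ij)) (p (fst ij)) (r (snd ij)) (p (snd ij))).
  { intros [i j] H. apply Hli in H. pose proof (proj1 H) as Hb; simpl in Hb.
    apply contact_iff in H; try (apply Hpos; lia). exact H. }
  destruct (argmax (fun _ => True) (fun i => snd (p i) + r i) n) as [A [HA [_ HAmax]]].
  { exists 0%nat; split; [lia|auto]. }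
  destruct (classic (exists B, (B < n)%nat /\ B <> A /\ close (r A) (p A) (r B) (p B)))
    as [[B [HB [HBA HcB]]]|Hiso].
  -
    assert (HsAB := pack_elim n r p A B Hpos Hpack HA HB (fun e => HBA (eq_sym e))).
    assert (HrA := Hpos A HA). assert (HrB := Hpos B HB).
    assert (HD : 0 < r A + r B) by lra.
    pose (u := (fst (p B) - fst (p A)) / (r A + r B)).
    pose (v := (snd (p B) - snd (p A)) / (r A + r B)).
    destruct HcB as [HcBx HcBy].
    rewrite Rabs_minus_sym in HcBx, HcBy.
    unfold sep in HsAB. rewrite (Rabs_minus_sym (fst (p A))), (Rabs_minus_sym (snd (p A))) in HsAB.
    assert (Hu : Rabs u <= 1) by (apply div_le1; auto).
    assert (Hv : Rabs v <= 1) by (apply div_le1; auto).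
    assert (Huv : Rabs u = 1 \/ Rabs v = 1).
    { unfold u, v; rewrite !abs_div by lra. destruct HsAB as [E|E]; [left|right];
      (replace (Rabs _) with (r A + r B) by lra); field; lra. }
    destruct (L_surj u v Hu Hv Huv) as [t1 [Ht1 [Xu Yv]]].
    pose (f := hm r p (r n) (p A) (r A + r n) A n).
    assert (F0 : 0 <= f 0).
    { apply hm_ge. intros i Hi HiA. unfold Gf, cpt; cbn [fst snd]. destruct L0 as [-> ->]. rewrite mx_eq.
      assert (HH := HAmax i Hi I). simpl in HH.
      pose proof (Rmax_r (Rabs (fst (p A) + (r A + r n) * 1 - fst (p i)))
                         (Rabs (snd (p A) + (r A + r n) * 1 - snd (p i)))).
      pose proof (Rle_abs (snd (p A) + (r A + r n) * 1 - snd (p i))). lra. }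
    assert (F1 : f t1 < 0).
    { eapply Rle_lt_trans; [apply (hm_le _ _ _ _ _ _ _ _ B); auto|].
      unfold Gf, cpt; cbn [fst snd]. rewrite Xu, Yv, mx_eq.
      replace (fst (p A) + (r A + r n) * u - fst (p B)) with ((r n - r B) * u)
        by (unfold u; field; lra).
      replace (snd (p A) + (r A + r n) * v - snd (p B)) with ((r n - r B) * v)
        by (unfold v; field; lra).
      rewrite !Rabs_mult.
      assert (Habs : Rabs (r n - r B) < r B + r n) by rabs.
      pose proof (Rabs_pos (r n - r B)).
      assert (Rabs (r n - r B) * Rabs u < r B + r n) by nra.
      assert (Rabs (r n - r B) * Rabs v < r B + r n) by nra.
      assert (Rmax (Rabs (r n - r B) * Rabs u) (Rabs (r n - r B) * Rabs v) < r B + r n)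
        by (apply Rmax_lub_lt; auto).
      lra. }
    destruct (IVT_cor f 0 t1 (c_hm _ _ _ _ _ _ _) Ht1 ltac:(nra)) as [ts [Hts Hf0]].
    assert (Gge : forall i, (i < n)%nat -> i <> A -> 0 <= Gf r p (r n) (p A) (r A + r n) i ts).
    { intros i Hi HiA. rewrite <- Hf0. apply hm_le; auto. }
    destruct (hm_cases r p (r n) (p A) (r A + r n) A n ts) as [H1|[B' [HB' [HB'A HG]]]].
    { unfold f in Hf0; lra. }
    unfold f in Hf0. rewrite Hf0 in HG.
    pose (c := cpt (p A) (r A + r n) ts).
    pose (p' := fun i => if Nat.eqb i n then c else p i).
    assert (Hp'old : forall i, (i < n)%nat -> p' i = p i).
    { intros i Hi; unfold p'; destruct (Nat.eqb_spec i n); [lia|auto]. }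
    assert (Hp'n : p' n = c) by (unfold p'; rewrite Nat.eqb_refl; auto).
    assert (HcA : close (r A) (p A) (r n) c /\ sep (r A) (p A) (r n) c).
    { unfold c, cpt; destruct (L_bnd ts) as [b1 [b2 b3]]. unfold close, sep; simpl.
      replace (fst (p A) - (fst (p A) + (r A + r n) * LX ts)) with (- ((r A + r n) * LX ts)) by ring.
      replace (snd (p A) - (snd (p A) + (r A + r n) * LY ts)) with (- ((r A + r n) * LY ts)) by ring.
      rewrite !Rabs_Ropp, !Rabs_mult, (Rabs_pos_eq (r A + r n)) by lra.
      pose proof (Rabs_pos (LX ts)). pose proof (Rabs_pos (LY ts)).
      split; [split; nra|]. destruct b3 as [E|E]; rewrite E; [left|right]; lra. }
    assert (Hci : forall i, (i < n)%nat -> i <> A -> sep (r i) (p i) (r n) c).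
    { intros i Hi HiA. specialize (Gge i Hi HiA). unfold Gf in Gge. fold c in Gge.
      rewrite mx_eq in Gge. unfold sep.
      rewrite (Rabs_minus_sym (fst (p i))), (Rabs_minus_sym (snd (p i))).
      unfold Rmax in Gge; destruct Rle_dec in Gge; [right|left]; lra. }
    assert (HcB' : close (r B') (p B') (r n) c).
    { unfold Gf in HG. fold c in HG. rewrite mx_eq in HG. unfold close.
      rewrite (Rabs_minus_sym (fst (p B'))), (Rabs_minus_sym (snd (p B'))).
      pose proof (Rmax_l (Rabs (fst c - fst (p B'))) (Rabs (snd c - snd (p B')))).
      pose proof (Rmax_r (Rabs (fst c - fst (p B'))) (Rabs (snd c - snd (p B')))).
      split; lra. }
    destruct (count_exists (S n) r p') as [k' Hk'].
    exists p', k'. split; [|split; [exact Hk'|]].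
    + apply pack_intro; auto. intros i j Hij Hj.
      destruct (Nat.eq_dec j n).
      * subst j. rewrite Hp'n, Hp'old by lia.
        destruct (Nat.eq_dec i A); [subst; apply HcA|apply Hci; auto; lia].
      * rewrite !Hp'old by lia. apply (pack_elim n); auto; lia.
    + assert (Hlen2 : (length (l ++ (A, n) :: (B', n) :: nil) <= k')%nat).
      { apply (count_ge _ _ _ _ _ Hk').
        - apply NoDup_app; auto.
          + constructor; [simpl; intros [E|[]]; inversion E; auto|].
            constructor; [simpl; tauto|constructor].
          + intros a Ha Hin. apply Hold in Ha. simpl in Hin.
            destruct Hin as [<-|[<-|[]]]; simpl in Ha; lia.
        - intros ij Hin. apply in_app_or in Hin. destruct Hin as [Hin|Hin].
          + destruct ij as [i j]. destruct (Hold _ Hin) as [Hb Hc]; simpl in *.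
            apply contact_iff; try (apply Hpos'; lia). split; [lia|].
            rewrite !Hp'old by lia. auto.
          + simpl in Hin. destruct Hin as [<-|[<-|[]]];
            apply contact_iff; try (apply Hpos'; lia); (split; [lia|]);
            rewrite Hp'n, Hp'old by lia; [apply HcA|auto]. }
      rewrite length_app in Hlen2; simpl in Hlen2; lia.
  -
    assert (Hiso' : forall B, (B < n)%nat -> B <> A -> ~ close (r A) (p A) (r B) (p B))
      by (intros B HB HBA Hc; apply Hiso; eauto).
    destruct (argmax (fun i => i <> A) (fun i => snd (p i) + r i) n) as [A2 [HA2 [HA2A HA2max]]].
    { destruct (Nat.eq_dec A 0); [exists 1%nat|exists 0%nat]; split; lia. }
    assert (HrA := Hpos A HA). assert (HrA2 := Hpos A2 HA2).
    pose (cq := (fst (p A2) + r A2 + r n, snd (p A2) + r A2 + r n)).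
    pose (ca := (fst (p A2) + r A2 + 2 * r n + r A, snd (p A2) + r A2 + r A)).
    pose (p' := fun i => if Nat.eqb i n then cq else if Nat.eqb i A then ca else p i).
    assert (Hp'old : forall i, (i < n)%nat -> i <> A -> p' i = p i).
    { intros i Hi HiA; unfold p'; destruct (Nat.eqb_spec i n); [lia|].
      destruct (Nat.eqb_spec i A); [lia|auto]. }
    assert (Hp'n : p' n = cq) by (unfold p'; rewrite Nat.eqb_refl; auto).
    assert (Hp'A : p' A = ca).
    { unfold p'; destruct (Nat.eqb_spec A n); [lia|]. rewrite Nat.eqb_refl; auto. }
    destruct (count_exists (S n) r p') as [k' Hk'].
    exists p', k'. split; [|split; [exact Hk'|]].
    + apply pack_intro; auto. intros i j Hij Hj.
      destruct (Nat.eq_dec j n).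
      * subst j. rewrite Hp'n. destruct (Nat.eq_dec i A).
        -- subst i; rewrite Hp'A. left. unfold ca, cq; simpl. rabs.
        -- rewrite Hp'old by lia. right. unfold cq; simpl.
           assert (HH := HA2max i ltac:(lia) n0). simpl in HH. rabs.
      * destruct (Nat.eq_dec j A).
        -- subst j; rewrite Hp'A, Hp'old by lia. right; unfold ca; simpl.
           assert (HH := HA2max i ltac:(lia) ltac:(lia)). simpl in HH. rabs.
        -- destruct (Nat.eq_dec i A).
           ++ subst i; rewrite Hp'A, Hp'old by lia. apply sep_sym. right; unfold ca; simpl.
              assert (HH := HA2max j ltac:(lia) n1). simpl in HH. rabs.
           ++ rewrite !Hp'old by lia. apply (pack_elim n); auto; lia.
    + assert (Hlen2 : (length (l ++ (A, n) :: (A2, n) :: nil) <= k')%nat).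
      { apply (count_ge _ _ _ _ _ Hk').
        - apply NoDup_app; auto.
          + constructor; [simpl; intros [E|[]]; inversion E; auto|].
            constructor; [simpl; tauto|constructor].
          + intros a Ha Hin. apply Hold in Ha. simpl in Hin.
            destruct Hin as [<-|[<-|[]]]; simpl in Ha; lia.
        - intros ij Hin. apply in_app_or in Hin. destruct Hin as [Hin|Hin].
          + destruct ij as [i j]. destruct (Hold _ Hin) as [Hb Hc]; simpl in *.
            assert (i <> A). { intro E; subst i. apply (Hiso' j); auto; lia. }
            assert (j <> A). { intro E; subst j. apply (Hiso' i); auto; [lia|]. apply close_sym; auto. }
            apply contact_iff; try (apply Hpos'; lia). split; [lia|].
            rewrite !Hp'old by lia. auto.
          + simpl in Hin. destruct Hin as [<-|[<-|[]]];
            apply contact_iff; try (apply Hpos'; lia); (split; [lia|]); rewrite Hp'n.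
            * rewrite Hp'A. unfold close, ca, cq; simpl. split; rabs.
            * rewrite Hp'old by lia. unfold close, cq; simpl. split; rabs. }
      rewrite length_app in Hlen2; simpl in Hlen2; lia.
Qed.
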